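(* Let $n\ge1$, let $p$ be a prime and let $\ell(\mathbf{z})\in\mathbb{F}_p[\mathbf{z}]$ be a nonvanishing linear form in $n$ variables $\mathbf{z}=(z_1,\dots,z_n)$. For an $n\times n$ matrix of variables $\mathbf{X}=(\mathbf{z}\mid\mathbf{Z})$ (first column $\mathbf{z}$, remaining columns $\mathbf{Z}$) put $L(\mathbf{X})=\ell(\mathbf{z})$. Then \[ S_p(L)=\sum_{\substack{\mathbf{X}\in\mathbb{F}_p^{n\times n}\\ \det\mathbf{X}=0}}\exp\left(2\pi i\,L(\mathbf{X})/p\right)\ll p^{n^2-n}, \] where the implied constant depends only on $n$.
   Context: Here $L(\mathbf{X})\in\mathbb{F}_p$ is identified with an integer in $\{0,\dots,p-1\}$ in the exponential. *)

(* Defs.v *)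
From Stdlib Require Import Reals.
From HB Require Import structures.
From mathcomp Require Import all_boot all_order all_algebra.
From mathcomp Require Import Rstruct.
Set Implicit Arguments. Unset Strict Implicit. Unset Printing Implicit Defensive.
Import Order.TTheory GRing.Theory Num.Theory.
Local Open Scope ring_scope.

Definition Lform (n : nat) (hn : (0 < n)%N) (p : nat) (a : 'rV['F_p]_n)
  (X : 'M['F_p]_n) : 'F_p := \sum_(i < n) a 0 i * X i (Ordinal hn).

(* Real and imaginary parts of S_p(L) = sum_{det X = 0} exp(2 pi i L(X)/p),
   with L(X) identified with its representative in {0,...,p-1}. *)
Definition Sp_re (n : nat) (hn : (0 < n)%N) (p : nat) (a : 'rV['F_p]_n) : R :=
  \sum_(X : 'M['F_p]_n | \det X == 0)
     cos (2 * PI * (nat_of_ord (Lform hn a X))%:R / p%:R).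

Definition Sp_im (n : nat) (hn : (0 < n)%N) (p : nat) (a : 'rV['F_p]_n) : R :=
  \sum_(X : 'M['F_p]_n | \det X == 0)
     sin (2 * PI * (nat_of_ord (Lform hn a X))%:R / p%:R).

Definition Sp_abs (n : nat) (hn : (0 < n)%N) (p : nat) (a : 'rV['F_p]_n) : R :=
  sqrt (Sp_re hn a ^+ 2 + Sp_im hn a ^+ 2).

(* Main.v *)
Require Import Defs.
From Stdlib Require Import Reals.
From HB Require Import structures.
From mathcomp Require Import all_boot all_order all_algebra.
From mathcomp Require Import Rstruct.
From mathcomp Require Import ring lra.
Import Order.TTheory GRing.Theory Num.Theory.
Local Open Scope ring_scope.

Lemma R2E : IZR 2 = 2%:R :> R.
Proof. by rewrite IZRposE INRE. Qed.

Lemma sinB (x y : R) : sin (x - y) = sin x * cos y - cos x * sin y.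
Proof. by rewrite sinD -RoppE sin_neg cos_neg RoppE mulrN. Qed.
Lemma cosB (x y : R) : cos (x - y) = cos x * cos y + sin x * sin y.
Proof. by rewrite cosD -RoppE sin_neg cos_neg RoppE mulrN opprK. Qed.

Lemma L1 (a b x y : R) : a = x + y -> b = x - y ->
  2 * sin y * cos x = sin a - sin b /\ 2 * sin y * sin x = cos b - cos a.
Proof. move=> -> ->; rewrite !sinD !cosD !sin_neg !cos_neg !RoppE; split; ring. Qed.

Lemma trig_step (p k : nat) (h : R) : (p%:R : R) != 0 -> h = PI / p%:R ->
  2 * sin h * cos (2 * PI * k%:R / p%:R) =
   sin ((2 * k.+1%:R - 1) * h) - sin ((2 * k%:R - 1) * h) /\
  2 * sin h * sin (2 * PI * k%:R / p%:R) =
   cos ((2 * k%:R - 1) * h) - cos ((2 * k.+1%:R - 1) * h).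
Proof.
move=> pn0 ->; rewrite !RdivE !RmultE !RminusE !R2E !R1E.
apply: L1; first rewrite -natr1; field; done.
Qed.

Lemma trig_sum (p : nat) : (1 < p)%N ->
  \sum_(k < p) cos (2 * PI * k%:R / p%:R) = 0 /\
  \sum_(k < p) sin (2 * PI * k%:R / p%:R) = 0.
Proof.
move=> p1.
have pn0 : (p%:R : R) != 0 by rewrite pnatr_eq0 -lt0n; exact: ltnW.
pose h : R := PI / p%:R.
have pi0 : 0 < PI by apply/RltP; exact: PI_RGT_0.
have sh : sin h != 0.
  apply/eqP; apply: Rgt_not_eq; apply: sin_gt_0.
    by apply/RltP; rewrite /h divr_gt0 // ltr0n; exact: ltnW.
  apply/RltP; rewrite /h ltr_pdivrMr ?ltr0n; last exact: ltnW.
  rewrite -[X in X < _]mulr1 ltr_pM2l //  ltr1n //.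
have ST k := trig_step p k h pn0 (erefl h).
have Hp0 : (2 * p%:R - 1) * h = - h + Rmult (IZR 2) PI.
  by rewrite /h RdivE RmultE R2E; field.
have Hp : sin ((2 * p%:R - 1) * h) = - sin h /\ cos ((2 * p%:R - 1) * h) = cos h.
  rewrite !RmultE !RminusE R2E R1E Hp0 sinD cosD sin_2PI cos_2PI sin_neg cos_neg.
  by rewrite R1E R0E !RoppE !mulr1 !mulr0 oppr0 !addr0.
have Hm : sin ((2 * 0%:R - 1) * h) = - sin h /\ cos ((2 * 0%:R - 1) * h) = cos h.
  rewrite !RmultE !RminusE R2E R1E mulr0 sub0r mulN1r.
  by rewrite sin_neg cos_neg.
have h2 : 2 * sin h != 0 by rewrite mulf_neq0 // pnatr_eq0.
split; apply: (mulfI h2) => /=; rewrite mulr0 mulr_sumr.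
- under eq_bigr => k _ do rewrite (proj1 (ST k)).
  rewrite -(big_mkord xpredT (fun k => sin ((2 * k.+1%:R - 1) * h) - sin ((2 * k%:R - 1) * h))).
  rewrite telescope_sumr // (proj1 Hp) (proj1 Hm) opprK addNr //.
- under eq_bigr => k _ do rewrite (proj2 (ST k)) -opprB.
  rewrite sumrN -(big_mkord xpredT (fun k => cos ((2 * k.+1%:R - 1) * h) - cos ((2 * k%:R - 1) * h))).
  by rewrite telescope_sumr // (proj2 Hp) (proj2 Hm) subrr oppr0.
Qed.
Lemma char_sum_lin (F : finFieldType) n (a : 'rV[F]_n) (g : F -> R) :
  a != 0 -> \sum_s g s = 0 -> \sum_(u : 'cV[F]_n) g ((a *m u) 0 0) = 0.
Proof.
move=> an0 g0.
have [i ai] : exists i, a 0 i != 0.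
  apply/existsP; apply: contraR an0; rewrite negb_exists => /forallP H.
  apply/eqP/matrixP => x j; rewrite (ord1 x) mxE; exact/eqP/negPn/H.
pose v t : 'cV[F]_n := (t / a 0 i) *: delta_mx i 0.
have lfv u t : (a *m (u + v t)) 0 0 = (a *m u) 0 0 + t.
  rewrite mulmxDr mxE; congr (_ + _).
  by rewrite /v -scalemxAr mxE -colE mxE divfK.
set S := \sum_u _.
have St t : S = \sum_(u : 'cV[F]_n) g ((a *m u) 0 0 + t).
  rewrite /S (reindex_inj (addIr (v t))) /=.
  by apply: eq_bigr => u _; rewrite lfv.
have : (#|F|%:R : R) * S = 0.
  rewrite mulr_natl -sumr_const.
  under eq_bigr => t _ do rewrite (St t).
  rewrite exchange_big /= big1 // => u _.
  rewrite -[RHS]g0 [RHS](reindex_inj (addrI ((a *m u) 0 0))) /=; exact: eq_bigl.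
move/eqP; rewrite mulf_eq0 pnatr_eq0 => /orP [/eqP H|/eqP //].
have : (0 < #|F|)%N by apply/card_gt0P; exists 0.
by rewrite H.
Qed.
Section Mat.
Variables (F : finFieldType) (n : nat) (i0 : 'I_n).

Definition Nc (u : 'cV[F]_n) : R :=
  \sum_(X : 'M[F]_n | (\det X == 0) && (col i0 X == u)) 1.

Lemma col_mulmx (G X : 'M[F]_n) : col i0 (G *m X) = G *m col i0 X.
Proof. by rewrite !colE mulmxA. Qed.

Lemma Nc_unit G u : G \in unitmx -> Nc (G *m u) = Nc u.
Proof.
move=> Gu; rewrite /Nc (reindex_inj (can_inj (mulKmx Gu))) /=.
apply: eq_bigl => X; rewrite det_mulmx mulf_eq0 col_mulmx.
have -> : (\det G == 0) = false.
  by apply/negbTE; rewrite -unitfE -unitmxE.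
by rewrite (inj_eq (can_inj (mulKmx Gu))).
Qed.

Lemma exists_G (u : 'cV[F]_n) : u != 0 -> exists2 G, G \in unitmx & G *m u = pid_mx 1.
Proof.
move=> un0.
have r1 : \rank u = 1%N.
  apply/eqP; rewrite eqn_leq rank_leq_col lt0n mxrank_eq0 un0 //.
have E := mulmx_ebase u; rewrite r1 in E.
set L := col_ebase u in E; set U := row_ebase u in E.
have Uu : U \in unitmx := row_ebase_unit u.
have U00 : U 0 0 != 0 by move: Uu; rewrite unitmxE det_mx11 unitfE.
exists ((U 0 0)^-1 *: invmx L).
  by rewrite unitmxZ ?unitfE ?invr_eq0 // unitmx_inv col_ebase_unit.
rewrite -scalemxAl -{1}E !mulmxA mulVmx ?col_ebase_unit // mul1mx.
rewrite (mx11_scalar U) mul_mx_scalar scalerA mxE eqxx mulr1n mulVf //.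
by rewrite scale1r.
Qed.

Lemma Nc_bound u : Nc u <= (#|F| ^ (n * n.-1))%:R.
Proof.
rewrite /Nc -card_mx.
have -> : \sum_(X : 'M[F]_n | (\det X == 0) && (col i0 X == u)) (1 : R) =
   #|[pred X : 'M[F]_n | (\det X == 0) && (col i0 X == u)]|%:R.
  by rewrite -sumr_const.
rewrite ler_nat.
apply: (@leq_card_in _ _ (col' i0)) => X Y /andP [_ /eqP HX] /andP [_ /eqP HY] E.
apply/matrixP => i j.
have [k ->|->] := unliftP i0 j.
  by have := congr1 (fun M : 'M[F]_(n, n.-1) => M i k) E; rewrite !mxE.
by have := congr1 (fun M : 'cV[F]_n => M i 0) (etrans HX (esym HY)); rewrite !mxE.
Qed.

Lemma decomp (g : 'cV[F]_n -> R) :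
  \sum_(X : 'M[F]_n | \det X == 0) g (col i0 X) = \sum_u g u * Nc u.
Proof.
rewrite (partition_big (fun X => col i0 X) xpredT) //=.
apply: eq_bigr => u _; rewrite /Nc mulr_sumr.
by apply: eq_bigr => X /andP [_ /eqP ->]; rewrite mulr1.
Qed.


Lemma split_sum (g : 'cV[F]_n -> R) : \sum_u g u = 0 ->
  \sum_u g u * Nc u = g 0 * (Nc 0 - Nc (pid_mx 1)).
Proof.
move=> g0.
rewrite (bigD1 0) //=.
have E : \sum_(u | u != 0) g u * Nc u = \sum_(u | u != 0) g u * Nc (pid_mx 1).
  apply: eq_bigr => u un0; have [G Gu <-] := exists_G u un0.
  by rewrite Nc_unit.
rewrite E -mulr_suml.
have : \sum_(u | u != 0) g u = - g 0.
  by move: g0; rewrite (bigD1 0) //= => /eqP; rewrite addrC addr_eq0 => /eqP.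
by move=> ->; rewrite mulrBr mulNr.
Qed.

End Mat.
Arguments Nc {F n} i0 u.
Arguments decomp {F n} i0 g.
Arguments split_sum {F n} i0 g.
Arguments Nc_bound {F n} i0 u.
Arguments char_sum_lin {F n} a g.

Lemma absdiff (K M P : R) : 0 <= K <= P -> 0 <= M <= P -> `|K - M| <= P.
Proof.
move=> /andP [h1 h2] /andP [h3 h4].
rewrite ler_norml; apply/andP; split; lra.
Qed.

Theorem lemma3p4 : forall (n : nat) (hn : (0 < n)%N), exists C : R,
  forall (p : nat), prime p -> forall a : 'rV['F_p]_n, a != 0 ->
    Sp_abs hn a <= C * (p%:R : R) ^+ (n * n - n).
Proof.
move=> n hn; exists 1 => p pr a an0; rewrite mul1r.
pose i0 := Ordinal hn.
have p1 : (1 < p)%N := prime_gt1 pr.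
have [Tc Ts] := trig_sum p p1.
have Sc : \sum_(s : 'F_p) cos (2 * PI * (nat_of_ord s)%:R / p%:R) = 0.
  rewrite -(big_mkord xpredT (fun k => cos (2 * PI * k%:R / p%:R))) Fp_cast //.
  by rewrite big_mkord.
have Ss : \sum_(s : 'F_p) sin (2 * PI * (nat_of_ord s)%:R / p%:R) = 0.
  rewrite -(big_mkord xpredT (fun k => sin (2 * PI * k%:R / p%:R))) Fp_cast //.
  by rewrite big_mkord.
have LE X : Lform hn a X = (a *m col i0 X) 0 0.
  by rewrite /Lform mxE; apply: eq_bigr => j _; rewrite mxE.
have Hre : Sp_re hn a = Nc (F:='F_p) i0 0 - Nc (F:='F_p) i0 (pid_mx 1).
  rewrite /Sp_re.
  under eq_bigr => X _ do rewrite LE.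
  rewrite (@decomp 'F_p n i0 (fun u => cos (2 * PI * (nat_of_ord ((a *m u) 0 0))%:R / p%:R))).
  rewrite (@split_sum 'F_p n i0 _ (char_sum_lin a (fun s : 'F_p => cos (2 * PI * (nat_of_ord s)%:R / p%:R)) an0 Sc)).
  rewrite mulmx0 mxE /= !RmultE !RdivE mulr0 mul0r cos_0 mul1r //.
have Him : Sp_im hn a = 0.
  rewrite /Sp_im.
  under eq_bigr => X _ do rewrite LE.
  rewrite (@decomp 'F_p n i0 (fun u => sin (2 * PI * (nat_of_ord ((a *m u) 0 0))%:R / p%:R))).
  rewrite (@split_sum 'F_p n i0 _ (char_sum_lin a (fun s : 'F_p => sin (2 * PI * (nat_of_ord s)%:R / p%:R)) an0 Ss)).
  rewrite mulmx0 mxE /= !RmultE !RdivE mulr0 mul0r sin_0 mul0r //.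
have PE : ((#|'F_p| ^ (n * n.-1))%:R : R) = p%:R ^+ (n * n - n).
  by rewrite card_Fp // natrX -subn1 mulnBr muln1.
have B u : 0 <= Nc (F:='F_p) i0 u <= p%:R ^+ (n * n - n).
  apply/andP; split; first by apply: sumr_ge0.
  rewrite -PE; exact: Nc_bound.
rewrite /Sp_abs Hre Him RplusE RsqrtE expr0n /= addr0 sqrtr_sqr.
exact: absdiff (B 0) (B (pid_mx 1)).
Qed.
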